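(* Let $n\ge1$, $U_n$ the family of bounded subsets of $\mathbb R^n$, and let $\mu:U_n\to B_2$ be a measure that is derivable on the closed set $A\in U_n$ (so $A$ is compact). Then the set $\mathrm{supp}_A\, d\mu=\{x\in A: d\mu(x)=1\}$ is finite.
   Context: $B_2=\{0,1\}$. $\mu:U_n\to B_2$ is a measure if for every sequence $(A_p)$ of pairwise disjoint sets of $U_n$ with $\bigcup_pA_p\in U_n$, the set $\{p:\mu(A_p)=1\}$ is finite and $\mu(\bigcup_pA_p)$ equals the number of such $p$ modulo 2. For bounded $B$, $d(B)=\sup_{x,y\in B}\|x-y\|$ (Euclidean). $\mu$ is derivable at $x\in A$ (where $A\in U_n$) if there exist $\varepsilon>0$ and $a\in B_2$ such that for all $B\in U_n$ with $x\in B$ and $d(B)<\varepsilon$, $\mu(B)=a$; this $a$ (necessarily $a=\mu(\{x\})$) is the derivative $d\mu(x)$. $\mu$ is derivable on $A$ if it is derivable at every $x\in A$. *)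

(* Defs.v *)
From HB Require Import structures.
From mathcomp Require Import all_boot all_order all_algebra.
From mathcomp Require Import all_classical all_reals all_analysis.
Set Implicit Arguments. Unset Strict Implicit. Unset Printing Implicit Defensive.
Import Order.TTheory GRing.Theory Num.Theory.
Import numFieldNormedType.Exports.
Local Open Scope classical_set_scope.
Local Open Scope ring_scope.

Definition edist (R : realType) (n : nat) (x y : 'rV[R]_n) : R :=
  Num.sqrt (\sum_(i < n) (x ord0 i - y ord0 i) ^+ 2).

Definition ebounded (R : realType) (n : nat) (B : set 'rV[R]_n) : Prop :=
  exists M : R, forall x, B x -> edist x 0 <= M.

Definition diam (R : realType) (n : nat) (B : set 'rV[R]_n) : \bar R :=
  ereal_sup [set ((edist x y)%:E) | x in B & y in B].

(* μ : U_n -> B_2 = {0,1} (represented by bool, 1 = true) is a measure: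
   for every sequence of pairwise disjoint bounded sets with bounded union,
   only finitely many A_p have μ(A_p) = 1 and μ(⋃ A_p) is the parity of
   their number. Values of μ on unbounded sets are irrelevant. *)
Definition B2_measure (R : realType) (n : nat) (mu : set 'rV[R]_n -> bool) : Prop :=
  forall A : nat -> set 'rV[R]_n,
    (forall p, ebounded (A p)) ->
    trivIset setT A ->
    ebounded (\bigcup_p A p) ->
    exists N : nat,
      (forall p, (N <= p)%N -> mu (A p) = false) /\
      mu (\bigcup_p A p) = odd (\sum_(p < N) nat_of_bool (mu (A p))).

Definition deriv_is (R : realType) (n : nat) (mu : set 'rV[R]_n -> bool)
    (x : 'rV[R]_n) (a : bool) : Prop :=
  exists2 eps : R, 0 < eps &
    forall B : set 'rV[R]_n, ebounded B -> B x -> (diam B < eps%:E)%E -> mu B = a.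

Definition derivable_at (R : realType) (n : nat) (mu : set 'rV[R]_n -> bool)
    (x : 'rV[R]_n) : Prop := exists a : bool, deriv_is mu x a.

Definition derivable_on (R : realType) (n : nat) (mu : set 'rV[R]_n -> bool)
    (A : set 'rV[R]_n) : Prop := forall x, A x -> derivable_at mu x.

Definition supp_deriv (R : realType) (n : nat) (mu : set 'rV[R]_n -> bool)
    (A : set 'rV[R]_n) : set 'rV[R]_n :=
  [set x | A x /\ deriv_is mu x true].

(* Main.v *)
Require Import Defs.
From mathcomp Require Import all_boot all_order all_algebra.
From mathcomp Require Import all_classical all_reals all_analysis.
Import numFieldNormedType.Exports.
Import Order.TTheory GRing.Theory Num.Theory.
Local Open Scope classical_set_scope.
Local Open Scope ring_scope.

Lemma diam1 (R : realType) (n : nat) (x : 'rV[R]_n) : diam [set x] = 0%E.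
Proof.
rewrite /diam.
set S := (X in ereal_sup X).
have -> : S = [set 0%E].
  apply/seteqP; split => z /=.
    case=> a -> [b -> <-]; rewrite /Defs.edist big1 ?Num.Theory.sqrtr0 // => i _; by rewrite subrr expr0n.
  move=> ->; exists x => //; exists x => //.
  rewrite /Defs.edist big1 ?Num.Theory.sqrtr0 // => i _; by rewrite subrr expr0n.
exact: ereal_sup1.
Qed.

Theorem theorem5p13 (R : realType) (n : nat) (mu : set 'rV[R]_n -> bool)
    (A : set 'rV[R]_n) :
  (0 < n)%N ->
  B2_measure mu ->
  ebounded A ->
  closed A ->
  derivable_on mu A ->
  finite_set (supp_deriv mu A).
Proof.
move=> _ Hmu [M HM] _ _.
apply: contrapT => /infiniteP/ppcard_leP [f].
have fS : forall p, supp_deriv mu A (f p) by move=> p; exact: ('funS_ f) p I.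
have finj : injective f by move=> a b e; exact: ('inj_ f) (in_setT _) (in_setT _) e.
have mu1 : forall p, mu [set f p] = true.
  move=> p; have [HA [e e0 He]] := fS p.
  apply: He => //; last by rewrite diam1 lte_fin.
  by exists (Defs.edist (f p) 0) => y ->.
have [|||N [HN _]] := Hmu (fun p => [set f p]).
- by move=> p; exists (Defs.edist (f p) 0) => y ->.
- by move=> i j _ _ [y [/= -> /finj]].
- by exists M => y [p _ ->]; apply: HM; case: (fS p).
by move: (HN N (leqnn N)); rewrite mu1.
Qed.
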